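(* Let $k\ge0$ be an integer. For $j\in\{1,2\}$ let $(\pi_j^{\mathrm{pre}},q_j^{\mathrm{pre}})$ and $(\pi_j^{\mathrm{post}},q_j^{\mathrm{post}})$ be pre- and post-branch (policy, dynamics) pairs, and let $\eta_j=\eta_k(\pi_j^{\mathrm{pre}},q_j^{\mathrm{pre}};\pi_j^{\mathrm{post}},q_j^{\mathrm{post}})$. For $t\ge0$ and $0\le i\le t$ let $\nu_{t,i}$ be the law of $s_i$ in the branched construction for time $t$ using the pairs of index $j=1$. Suppose that for all $t\ge0$: (i) for all $0\le i<m_t$: $\mathbb E_{s\sim\nu_{t,i},\,a\sim\pi_1^{\mathrm{pre}}(\cdot\mid s)}\big[D_{TV}(q_1^{\mathrm{pre}}(\cdot\mid s,a),q_2^{\mathrm{pre}}(\cdot\mid s,a))\big]\le\epsilon_m^{\mathrm{pre}}$; (ii) for all $m_t\le i<t$: $\mathbb E_{s\sim\nu_{t,i},\,a\sim\pi_1^{\mathrm{post}}(\cdot\mid s)}\big[D_{TV}(q_1^{\mathrm{post}}(\cdot\mid s,a),q_2^{\mathrm{post}}(\cdot\mid s,a))\big]\le\epsilon_m^{\mathrm{post}}$; and that $\sup_s D_{TV}(\pi_1^{\mathrm{pre}}(\cdot\mid s),\pi_2^{\mathrm{pre}}(\cdot\mid s))\le\epsilon_\pi^{\mathrm{pre}}$ and $\sup_s D_{TV}(\pi_1^{\mathrm{post}}(\cdot\mid s),\pi_2^{\mathrm{post}}(\cdot\mid s))\le\epsilon_\pi^{\mathrm{post}}$. Then $$|\eta_1-\eta_2|\le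 2r_{\max}\left[\frac{\gamma^{k+1}}{(1-\gamma)^2}(\epsilon_m^{\mathrm{pre}}+\epsilon_\pi^{\mathrm{pre}})+\frac{k}{1-\gamma}(\epsilon_m^{\mathrm{post}}+\epsilon_\pi^{\mathrm{post}})+\frac{\gamma^k}{1-\gamma}\epsilon_\pi^{\mathrm{pre}}+\frac{1}{1-\gamma}\epsilon_\pi^{\mathrm{post}}\right].$$
   Context: Let $\mathcal S$ and $\mathcal A$ be countable (e.g. finite) state and action spaces, $\rho_0$ a probability distribution on $\mathcal S$ (initial state distribution), $\gamma\in(0,1)$ a discount factor, and $r:\mathcal S\times\mathcal A\to\mathbb R$ a reward function with $|r(s,a)|\le r_{\max}$ for all $(s,a)$. A policy is a Markov kernel $\pi(a\mid s)$ from $\mathcal S$ to $\mathcal A$; a dynamics kernel is a Markov kernel $q(s'\mid s,a)$ from $\mathcal S\times\mathcal A$ to $\mathcal S$. For probability distributions $\mu,\nu$ on a countable set, $D_{TV}(\mu,\nu)=\frac12\sum_x|\mu(x)-\nu(x)|$. Branched return: given a ''pre-branch'' pair (policy $\pi^{\mathrm{pre}}$, dynamics $q^{\mathrm{pre}}$), a ''post-branch'' pair (policy $\pi^{\mathrm{post}}$, dynamics $q^{\mathrm{post}}$) and an integer $k\ge0$, for each $t\ge0$ let $m_t=\max(t-k,0)$ and generate $s_0\sim\rho_0$; for $0\le i<m_t$: $a_i\sim\pi^{\mathrm{pre}}(\cdot\mid s_i)$, $s_{i+1}\sim q^{\mathrm{pre}}(\cdot\mid s_i,a_i)$; for $m_t\le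 i<t$: $a_i\sim\pi^{\mathrm{post}}(\cdot\mid s_i)$, $s_{i+1}\sim q^{\mathrm{post}}(\cdot\mid s_i,a_i)$; finally $a_t\sim\pi^{\mathrm{post}}(\cdot\mid s_t)$. Let $d_t$ be the law of $(s_t,a_t)$ so produced. The $k$-branched return is $\eta_k(\pi^{\mathrm{pre}},q^{\mathrm{pre}};\pi^{\mathrm{post}},q^{\mathrm{post}})=\sum_{t\ge0}\gamma^t\,\mathbb E_{(s,a)\sim d_t}[r(s,a)]$. (Thus the state at time $t$ is obtained by following the pre-branch pair up to time $t-k$ and then the post-branch pair for the remaining at most $k$ steps.) *)

(* Defs.v *)
From Stdlib Require Import Reals Lra Lia Classical ClassicalEpsilon.
Open Scope R_scope.

(* States and actions: countable spaces, modelled as nat (any countable set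
   embeds in nat). *)

(* Sum of a real series over nat: its limit (infinite_sum) when it exists,
   arbitrary otherwise.  All sums used below converge. *)
Definition tsum (f : nat -> R) : R :=
  epsilon (inhabits 0) (fun l => infinite_sum f l).

Definition is_dist (p : nat -> R) : Prop :=
  (forall x, 0 <= p x) /\ infinite_sum p 1.

(* policy pi s a = pi(a|s); dynamics q s a s' = q(s'|s,a) *)
Definition policy := nat -> nat -> R.
Definition dynamics := nat -> nat -> nat -> R.

Definition is_policy (pi : policy) : Prop := forall s, is_dist (pi s).
Definition is_dynamics (q : dynamics) : Prop :=
  forall s a, is_dist (q s a).

Definition D_TV (mu nu : nat -> R) : R :=
  / 2 * tsum (fun x => Rabs (mu x - nu x)).

Definition step (pi : policy) (q : dynamics) (nu : nat -> R) : nat -> R :=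
  fun s' => tsum (fun s => tsum (fun a => nu s * pi s a * q s a s')).

(* m_t = max(t-k,0) (truncated subtraction on nat) *)
Definition m_t (k t : nat) : nat := (t - k)%nat.

Fixpoint state_law (rho0 : nat -> R) (k : nat)
    (pipre : policy) (qpre : dynamics) (pipost : policy) (qpost : dynamics)
    (t i : nat) : nat -> R :=
  match i with
  | O => rho0
  | S i' =>
      let nu := state_law rho0 k pipre qpre pipost qpost t i' in
      if Nat.ltb i' (m_t k t) then step pipre qpre nu else step pipost qpost nu
  end.

Definition eta_k (rho0 : nat -> R) (gamma : R) (r : nat -> nat -> R) (k : nat)
    (pipre : policy) (qpre : dynamics) (pipost : policy) (qpost : dynamics) : R :=
  tsum (fun t =>
    gamma ^ t *
    tsum (fun s => tsum (fun a =>
      state_law rho0 k pipre qpre pipost qpost t t s * pipost s a * r s a))).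

(* Main.v *)
Require Import Defs.
From Stdlib Require Import Reals Lra Lia Classical ClassicalEpsilon FunctionalExtensionality.
From Coquelicot Require Import Coquelicot.
Open Scope R_scope.

Lemma tsum_Series f : ex_series f -> tsum f = Series f.
Proof.
  intros H. unfold tsum.
  assert (Hl : infinite_sum f (Series f)) by (apply is_series_Reals, Series_correct, H).
  assert (E := epsilon_spec (inhabits 0) (fun l => infinite_sum f l) (ex_intro _ _ Hl)).
  simpl in E. apply is_series_Reals in E. apply is_series_unique in E. auto.
Qed.

Lemma Series_le_bound a M : ex_series a -> (forall N, sum_f_R0 a N <= M) -> Series a <= M.
Proof.
  intros H HM. apply Series_correct, is_series_Reals in H.
  apply Rle_cv_lim with (Un := fun N => sum_f_R0 a N) (Vn := fun _ => M); auto.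
  intros e He; exists 0%nat; intros; unfold R_dist. rewrite Rminus_diag, Rabs_R0; lra.
Qed.

Lemma Series_ge0 a : (forall n, 0 <= a n) -> ex_series a -> 0 <= Series a.
Proof.
  intros Hp H. apply Series_correct, is_series_Reals in H.
  apply Rle_cv_lim with (Vn := fun N => sum_f_R0 a N) (Un := fun _ => 0); auto.
  - intros; apply cond_pos_sum; auto.
  - intros e He; exists 0%nat; intros; unfold R_dist. rewrite Rminus_diag, Rabs_R0; lra.
Qed.

Lemma sum_le_Series a N : (forall n, 0 <= a n) -> ex_series a -> sum_f_R0 a N <= Series a.
Proof.
  intros Hp H. rewrite (Series_incr_n a (S N)) by (auto; lia). simpl pred.
  assert (0 <= Series (fun k => a (S N + k)%nat)).
  { apply Series_ge0; auto. apply (ex_series_incr_n a (S N)); auto. }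
  lra.
Qed.

Lemma ex_series_pos_bound a M : (forall n, 0 <= a n) -> (forall N, sum_f_R0 a N <= M) -> ex_series a.
Proof.
  intros Hp HM. apply ex_series_Reals_1. apply growing_cv.
  - intro n. simpl. specialize (Hp (S n)). lra.
  - exists M. intros x [n ->]. auto.
Qed.

Lemma ex_series_dom f g : (forall n, Rabs (f n) <= g n) -> ex_series g -> ex_series f.
Proof. intros H Hg. apply (ex_series_le f g); auto. Qed.

Lemma Series_dom f g : (forall n, Rabs (f n) <= g n) -> ex_series g -> Rabs (Series f) <= Series g.
Proof.
  intros H Hg. eapply Rle_trans. apply Series_Rabs.
  apply (ex_series_dom _ g); auto. intros; rewrite Rabs_Rabsolu; auto.
  apply Series_le; auto. intros; split; auto. apply Rabs_pos.
Qed.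

Lemma Series_mono f g : (forall n, 0 <= f n <= g n) -> ex_series g -> Series f <= Series g.
Proof. apply Series_le. Qed.

Lemma ex_series_sum (g : nat -> nat -> R) J :
  (forall j, ex_series (fun i => g i j)) -> ex_series (fun i => sum_f_R0 (g i) J).
Proof.
  intros H; induction J; simpl.
  - apply H.
  - apply (ex_series_plus (fun i => sum_f_R0 (g i) J) (fun i => g i (S J))); auto.
Qed.

Lemma Series_sum (g : nat -> nat -> R) J :
  (forall j, ex_series (fun i => g i j)) ->
  Series (fun i => sum_f_R0 (g i) J) = sum_f_R0 (fun j => Series (fun i => g i j)) J.
Proof.
  intros H; induction J; simpl.
  - reflexivity.
  - rewrite Series_plus; auto. rewrite IHJ; auto. apply ex_series_sum; auto.
Qed.

Definition ds (f : nat -> nat -> R) := Series (fun i => Series (f i)).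
Definition dconv (f : nat -> nat -> R) := (forall i, ex_series (f i)) /\ ex_series (fun i => Series (f i)).

Lemma tonelli_half f : (forall i j, 0 <= f i j) -> dconv f ->
  (forall j, ex_series (fun i => f i j)) /\ ex_series (fun j => Series (fun i => f i j))
  /\ Series (fun j => Series (fun i => f i j)) <= ds f.
Proof.
  intros Hp [H1 H2].
  assert (Hs0 : forall i, 0 <= Series (f i)) by (intros; apply Series_ge0; auto).
  assert (Hc : forall j, ex_series (fun i => f i j)).
  { intro j. apply (ex_series_pos_bound _ (ds f)). intros; auto.
    intro N. eapply Rle_trans.
    - apply (sum_Rle _ (fun i => Series (f i))). intros.
      eapply Rle_trans. 2: apply (sum_le_Series (f n) j); auto.
      destruct j. simpl; lra. simpl.
      assert (0 <= sum_f_R0 (f n) j) by (apply cond_pos_sum; auto). lra.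
    - apply sum_le_Series; auto. }
  assert (Hb : forall J, sum_f_R0 (fun j => Series (fun i => f i j)) J <= ds f).
  { intro J. rewrite <- Series_sum by auto. apply Series_mono; auto.
    intros i; split. apply cond_pos_sum; auto. apply sum_le_Series; auto. }
  assert (Hx : ex_series (fun j => Series (fun i => f i j))).
  { apply (ex_series_pos_bound _ (ds f)); auto. intros; apply Series_ge0; auto. }
  split; auto. split; auto. apply Series_le_bound; auto.
Qed.

Lemma tonelli f : (forall i j, 0 <= f i j) -> dconv f ->
  dconv (fun j i => f i j) /\ ds (fun j i => f i j) = ds f.
Proof.
  intros Hp Hd.
  destruct (tonelli_half f Hp Hd) as [A [B C]].
  assert (D : dconv (fun j i => f i j)) by (split; auto).
  destruct (tonelli_half (fun j i => f i j) (fun i j => Hp j i) D) as [_ [_ E]].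
  split; auto. unfold ds in *. apply Rle_antisym; auto.
Qed.

Lemma tonelli3 (w : nat -> nat -> nat -> R) : (forall s a x, 0 <= w s a x) ->
  (forall s a, ex_series (w s a)) -> dconv (fun s a => Series (w s a)) ->
  (forall x, dconv (fun s a => w s a x)) /\ ex_series (fun x => ds (fun s a => w s a x))
  /\ Series (fun x => ds (fun s a => w s a x)) = ds (fun s a => Series (w s a)).
Proof.
  intros Hp Hi [D1 D2].
  assert (T1 : forall s, dconv (fun x a => w s a x) /\
     ds (fun x a => w s a x) = Series (fun a => Series (w s a))).
  { intro s. apply (tonelli (fun a x => w s a x)); auto. split; auto. }
  set (g := fun s x => Series (fun a => w s a x)).
  assert (Hg : dconv g).
  { split. intro s. apply (proj1 (T1 s)).
    apply (ex_series_ext (fun s => Series (fun a => Series (w s a)))); auto.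
    intro s. symmetry. apply (proj2 (T1 s)). }
  assert (Hgp : forall s x, 0 <= g s x).
  { intros; apply Series_ge0; auto. apply (proj1 (T1 s)). }
  destruct (tonelli g Hgp Hg) as [[E1 E2] E3].
  split; [|split].
  - intro x. split. intro s. apply (proj1 (proj1 (T1 s))). apply E1.
  - apply E2.
  - unfold ds at 1. rewrite (Series_ext _ (fun x => Series (fun s => g s x))) by reflexivity.
    fold (ds (fun x s => g s x)). rewrite E3. unfold ds. apply Series_ext.
    intro s. apply (proj2 (T1 s)).
Qed.

Lemma dconv_dom f g : (forall i j, Rabs (f i j) <= g i j) -> dconv g ->
  dconv f /\ Rabs (ds f) <= ds g.
Proof.
  intros H [G1 G2].
  assert (F1 : forall i, ex_series (f i)) by (intro; apply (ex_series_dom _ (g i)); auto).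
  assert (B : forall i, Rabs (Series (f i)) <= Series (g i)) by (intro; apply Series_dom; auto).
  split. split; auto. apply (ex_series_dom _ (fun i => Series (g i))); auto.
  apply Series_dom; auto.
Qed.

Lemma ds_mono f g : (forall i j, 0 <= f i j <= g i j) -> dconv g -> ds f <= ds g.
Proof.
  intros H Hg. destruct (dconv_dom f g) as [_ B]; auto.
  intros i j; destruct (H i j); rewrite Rabs_pos_eq; lra.
  eapply Rle_trans; [apply Rle_abs|exact B].
Qed.

Lemma dconv_plus f g : dconv f -> dconv g -> dconv (fun i j => f i j + g i j)
  /\ ds (fun i j => f i j + g i j) = ds f + ds g.
Proof.
  intros [F1 F2] [G1 G2].
  assert (E : forall i, Series (fun j => f i j + g i j) = Series (f i) + Series (g i))
    by (intro; apply Series_plus; auto).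
  split. split. intro i. apply (ex_series_plus (f i) (g i)); auto.
  apply (ex_series_ext (fun i => Series (f i) + Series (g i))). intros; auto.
  apply (ex_series_plus (fun i => Series (f i)) (fun i => Series (g i))); auto.
  unfold ds. rewrite (Series_ext _ (fun i => Series (f i) + Series (g i))) by auto.
  apply Series_plus; auto.
Qed.

Lemma ds_scal c f : ds (fun i j => c * f i j) = c * ds f.
Proof.
  unfold ds. rewrite (Series_ext _ (fun i => c * Series (f i))).
  apply Series_scal_l. intros; apply Series_scal_l.
Qed.

Lemma dconv_scal c f : dconv f -> dconv (fun i j => c * f i j).
Proof.
  intros [F1 F2]. split. intro i. apply (ex_series_scal_l c (f i)); auto.
  apply (ex_series_ext (fun i => c * Series (f i))). intros; symmetry; apply Series_scal_l.
  apply (ex_series_scal_l c (fun i => Series (f i))); auto.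
Qed.

Lemma dconv_minus f g : dconv f -> dconv g -> dconv (fun i j => f i j - g i j)
  /\ ds (fun i j => f i j - g i j) = ds f - ds g.
Proof.
  intros Hf Hg. assert (Hg' := dconv_scal (-1) g Hg).
  destruct (dconv_plus f _ Hf Hg') as [A B].
  rewrite ds_scal in B.
  assert (E : (fun i j => f i j - g i j) = (fun i j => f i j + -1 * g i j)).
  { do 2 (apply functional_extensionality; intro). ring. }
  rewrite E. split; auto. rewrite B; ring.
Qed.

Definition dist (p : nat -> R) := (forall x, 0 <= p x) /\ ex_series p /\ Series p = 1.

Lemma is_dist_dist p : is_dist p -> dist p.
Proof.
  intros [H1 H2]. apply is_series_Reals in H2. split; auto. split.
  eexists; eauto. apply is_series_unique; auto.
Qed.

Definition L1 (p q : nat -> R) := Series (fun x => Rabs (p x - q x)).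

Lemma L1_props p q : dist p -> dist q ->
  ex_series (fun x => Rabs (p x - q x)) /\ 0 <= L1 p q <= 2 /\ D_TV p q = / 2 * L1 p q.
Proof.
  intros [P1 [P2 P3]] [Q1 [Q2 Q3]].
  assert (E : ex_series (fun x => p x + q x)) by (apply (ex_series_plus p q); auto).
  assert (B : forall x, Rabs (Rabs (p x - q x)) <= p x + q x).
  { intro x. rewrite Rabs_Rabsolu. specialize (P1 x); specialize (Q1 x).
    unfold Rabs; repeat destruct Rcase_abs; lra. }
  assert (X : ex_series (fun x => Rabs (p x - q x))) by (apply (ex_series_dom _ _ B E)).
  split; auto. split. split. apply Series_ge0; auto. intros; apply Rabs_pos.
  unfold L1. eapply Rle_trans. apply Series_le with (b := fun x => p x + q x); auto.
  intro n; split. apply Rabs_pos. specialize (B n); rewrite Rabs_Rabsolu in B; auto.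
  rewrite Series_plus; auto. lra.
  unfold D_TV. rewrite tsum_Series; auto.
Qed.

Lemma tsum2 f : dconv f -> tsum (fun s => tsum (fun a => f s a)) = ds f.
Proof.
  intros [F1 F2]. rewrite (functional_extensionality (fun s => tsum (fun a => f s a))
    (fun s => Series (f s))). apply tsum_Series; auto.
  intro s. apply tsum_Series; auto.
Qed.

Lemma ex_scal c f : ex_series f -> ex_series (fun n => c * f n).
Proof. intro H. apply (ex_series_scal_l c f H). Qed.

Lemma joint μ (π : policy) : dist μ -> (forall s, dist (π s)) ->
  dconv (fun s a => μ s * π s a) /\ ds (fun s a => μ s * π s a) = 1 /\
  (forall s, Series (fun a => μ s * π s a) = μ s).
Proof.
  intros [M1 [M2 M3]] HP.
  assert (E : forall s, Series (fun a => μ s * π s a) = μ s).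
  { intro s. rewrite Series_scal_l. destruct (HP s) as [_ [_ ->]]. ring. }
  split; [split|split]; auto.
  - intro s. apply ex_scal. apply HP.
  - apply (ex_series_ext μ); auto.
  - unfold ds. rewrite (Series_ext _ μ); auto.
Qed.

Lemma wconv (c : nat -> R) (k : nat -> nat -> R) (K : nat -> R) :
  (forall s, ex_series (k s)) -> (forall s, Series (k s) = K s) -> ex_series (fun s => c s * K s) ->
  dconv (fun s a => c s * k s a) /\ ds (fun s a => c s * k s a) = Series (fun s => c s * K s).
Proof.
  intros H1 H2 H3.
  assert (E : forall s, Series (fun a => c s * k s a) = c s * K s).
  { intro s. rewrite Series_scal_l, H2. auto. }
  split. split. intro s. apply ex_scal; auto. apply (ex_series_ext (fun s => c s * K s)); auto.
  unfold ds. apply Series_ext; auto.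
Qed.

Lemma tri a b c d : 0 <= a -> 0 <= d -> Rabs (a * b - c * d) <= a * Rabs (b - d) + Rabs (a - c) * d.
Proof.
  intros Ha Hd. replace (a * b - c * d) with (a * (b - d) + (a - c) * d) by ring.
  eapply Rle_trans. apply Rabs_triang. rewrite !Rabs_mult, (Rabs_pos_eq a), (Rabs_pos_eq d) by auto.
  lra.
Qed.

Lemma jointdiff μ1 μ2 (π1 π2 : policy) : dist μ1 -> dist μ2 -> (forall s, dist (π1 s)) -> (forall s, dist (π2 s)) ->
  dconv (fun s a => Rabs (μ1 s * π1 s a - μ2 s * π2 s a)) /\
  ds (fun s a => Rabs (μ1 s * π1 s a - μ2 s * π2 s a)) <=
    Series (fun s => μ1 s * L1 (π1 s) (π2 s)) + L1 μ1 μ2.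
Proof.
  intros D1 D2 P1 P2.
  assert (A : dconv (fun s a => μ1 s * Rabs (π1 s a - π2 s a)) /\
     ds (fun s a => μ1 s * Rabs (π1 s a - π2 s a)) = Series (fun s => μ1 s * L1 (π1 s) (π2 s))).
  { apply wconv. intro s. apply (L1_props _ _ (P1 s) (P2 s)). reflexivity.
    apply (ex_series_dom _ (fun s => 2 * μ1 s)). intro s.
    destruct (L1_props _ _ (P1 s) (P2 s)) as [_ [? _]]. destruct D1 as [M _].
    specialize (M s). rewrite Rabs_pos_eq by (apply Rmult_le_pos; lra). nra.
    apply ex_scal. apply D1. }
  assert (B : dconv (fun s a => Rabs (μ1 s - μ2 s) * π2 s a) /\
     ds (fun s a => Rabs (μ1 s - μ2 s) * π2 s a) = Series (fun s => Rabs (μ1 s - μ2 s) * 1)).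
  { apply wconv. intro s; apply P2. intro s; apply P2.
    apply (ex_series_ext (fun s => Rabs (μ1 s - μ2 s))). intros n; apply eq_sym, Rmult_1_r.
    apply (L1_props _ _ D1 D2). }
  destruct A as [A1 A2]; destruct B as [B1 B2].
  destruct (dconv_plus _ _ A1 B1) as [C1 C2].
  destruct (dconv_dom (fun s a => Rabs (μ1 s * π1 s a - μ2 s * π2 s a))
     (fun s a => μ1 s * Rabs (π1 s a - π2 s a) + Rabs (μ1 s - μ2 s) * π2 s a)) as [E1 E2]; auto.
  - intros s a. rewrite Rabs_Rabsolu. apply tri. apply D1. apply P2.
  - split; auto. eapply Rle_trans. apply Rle_abs. eapply Rle_trans. exact E2.
    rewrite C2, A2, B2. unfold L1. rewrite (Series_ext (fun s => Rabs (μ1 s - μ2 s) * 1) (fun s => Rabs (μ1 s - μ2 s))). lra. intros; ring.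
Qed.

Definition pol (π : policy) := forall s, dist (π s).
Definition dyn (q : dynamics) := forall s a, dist (q s a).

Lemma step_props μ π q : dist μ -> pol π -> dyn q ->
  (forall x, dconv (fun s a => μ s * π s a * q s a x)) /\
  (forall x, step π q μ x = ds (fun s a => μ s * π s a * q s a x)) /\ dist (step π q μ).
Proof.
  intros D P Q. destruct (joint μ π D P) as [J1 [J2 J3]].
  assert (E : (fun s a => Series (fun x => μ s * π s a * q s a x)) = (fun s a => μ s * π s a)).
  { do 2 (apply functional_extensionality; intro). rewrite Series_scal_l.
    destruct (Q x x0) as [_ [_ ->]]. ring. }
  destruct (tonelli3 (fun s a x => μ s * π s a * q s a x)) as [T1 [T2 T3]].
  - intros. apply Rmult_le_pos. apply Rmult_le_pos. apply D. apply P. apply Q.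
  - intros. apply ex_scal. apply Q.
  - rewrite E. auto.
  - assert (S : forall x, step π q μ x = ds (fun s a => μ s * π s a * q s a x)).
    { intro x. unfold step. apply tsum2. auto. }
    split; auto. split; auto. split; [|split].
    + intro x. rewrite S. apply Series_ge0. intro s. apply Series_ge0.
      intros. apply Rmult_le_pos. apply Rmult_le_pos. apply D. apply P. apply Q.
      apply (T1 x). apply (T1 x).
    + apply (ex_series_ext (fun x => ds (fun s a => μ s * π s a * q s a x))); auto.
    + rewrite (Series_ext _ (fun x => ds (fun s a => μ s * π s a * q s a x))) by auto.
      rewrite T3, E. auto.
Qed.

Lemma state_law_dist rho0 k pre qpre post qpost t i :
  dist rho0 -> pol pre -> dyn qpre -> pol post -> dyn qpost ->
  dist (state_law rho0 k pre qpre post qpost t i).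
Proof.
  intros. induction i; simpl; auto. destruct (Nat.ltb i (m_t k t)); apply step_props; auto.
Qed.

Lemma step_L1 μ1 μ2 π1 π2 q1 q2 : dist μ1 -> dist μ2 -> pol π1 -> pol π2 -> dyn q1 -> dyn q2 ->
  dconv (fun s a => μ1 s * π1 s a * L1 (q1 s a) (q2 s a)) /\
  L1 (step π1 q1 μ1) (step π2 q2 μ2) <=
    ds (fun s a => μ1 s * π1 s a * L1 (q1 s a) (q2 s a)) + Series (fun s => μ1 s * L1 (π1 s) (π2 s)) + L1 μ1 μ2.
Proof.
  intros D1 D2 P1 P2 Q1 Q2.
  destruct (joint μ1 π1 D1 P1) as [J1 _].
  destruct (step_props μ1 π1 q1 D1 P1 Q1) as [S1 [S2 S3]].
  destruct (step_props μ2 π2 q2 D2 P2 Q2) as [U1 [U2 U3]].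
  destruct (jointdiff μ1 μ2 π1 π2 D1 D2 P1 P2) as [K1 K2].
  assert (Jn : forall s a, 0 <= μ1 s * π1 s a) by (intros; apply Rmult_le_pos; [apply D1|apply P1]).
  assert (A : dconv (fun s a => μ1 s * π1 s a * L1 (q1 s a) (q2 s a))).
  { apply (dconv_dom _ (fun s a => 2 * (μ1 s * π1 s a))). intros s a.
    destruct (L1_props _ _ (Q1 s a) (Q2 s a)) as [_ [? _]]. specialize (Jn s a).
    rewrite Rabs_pos_eq by (apply Rmult_le_pos; lra). nra. apply dconv_scal; auto. }
  split; auto.
  set (w := fun s a x => μ1 s * π1 s a * Rabs (q1 s a x - q2 s a x) + Rabs (μ1 s * π1 s a - μ2 s * π2 s a) * q2 s a x).
  assert (Wp : forall s a x, 0 <= w s a x).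
  { intros. unfold w. apply Rplus_le_le_0_compat; apply Rmult_le_pos; auto using Rabs_pos. apply Q2. }
  assert (We : forall s a, ex_series (w s a) /\ Series (w s a) =
     μ1 s * π1 s a * L1 (q1 s a) (q2 s a) + Rabs (μ1 s * π1 s a - μ2 s * π2 s a)).
  { intros s a. destruct (L1_props _ _ (Q1 s a) (Q2 s a)) as [X _].
    destruct (Q2 s a) as [_ [Y Z]].
    assert (X' := ex_scal (μ1 s * π1 s a) _ X). assert (Y' := ex_scal (Rabs (μ1 s * π1 s a - μ2 s * π2 s a)) _ Y).
    split. apply (ex_series_plus _ _ X' Y'). unfold w. rewrite Series_plus; auto.
    rewrite !Series_scal_l, Z. unfold L1. ring. }
  assert (WE : (fun s a => Series (w s a)) = (fun s a => μ1 s * π1 s a * L1 (q1 s a) (q2 s a) + Rabs (μ1 s * π1 s a - μ2 s * π2 s a))).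
  { do 2 (apply functional_extensionality; intro). apply We. }
  destruct (dconv_plus _ _ A K1) as [C1 C2].
  destruct (tonelli3 w Wp (fun s a => proj1 (We s a))) as [T1 [T2 T3]].
  { rewrite WE. auto. }
  rewrite WE, C2 in T3.
  assert (B : forall x, Rabs (step π1 q1 μ1 x - step π2 q2 μ2 x) <= ds (fun s a => w s a x)).
  { intro x. rewrite S2, U2. destruct (dconv_minus _ _ (S1 x) (U1 x)) as [M1 M2].
    rewrite <- M2. apply dconv_dom; auto. intros s a. unfold w.
    apply tri. apply Jn. apply Q2. }
  unfold L1 at 1. eapply Rle_trans. apply Series_le with (b := fun x => ds (fun s a => w s a x)); auto.
  intro; split; auto using Rabs_pos. rewrite T3. lra.
Qed.

Lemma reward_props μ π (r : nat -> nat -> R) rmax : dist μ -> pol π -> (forall s a, Rabs (r s a) <= rmax) ->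
  dconv (fun s a => μ s * π s a * r s a) /\ Rabs (ds (fun s a => μ s * π s a * r s a)) <= rmax.
Proof.
  intros D P H. destruct (joint μ π D P) as [J1 [J2 _]].
  destruct (dconv_dom (fun s a => μ s * π s a * r s a) (fun s a => rmax * (μ s * π s a))) as [A B].
  - intros s a. rewrite Rabs_mult, (Rabs_pos_eq (μ s * π s a)) by (apply Rmult_le_pos; [apply D|apply P]).
    rewrite Rmult_comm. apply Rmult_le_compat_r. apply Rmult_le_pos; [apply D|apply P]. auto.
  - apply dconv_scal; auto.
  - split; auto. rewrite ds_scal, J2 in B. lra.
Qed.

Lemma reward_diff μ1 μ2 π1 π2 (r : nat -> nat -> R) rmax : dist μ1 -> dist μ2 -> pol π1 -> pol π2 ->
  (forall s a, Rabs (r s a) <= rmax) ->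
  Rabs (ds (fun s a => μ1 s * π1 s a * r s a) - ds (fun s a => μ2 s * π2 s a * r s a)) <=
  rmax * (Series (fun s => μ1 s * L1 (π1 s) (π2 s)) + L1 μ1 μ2).
Proof.
  intros D1 D2 P1 P2 H.
  destruct (reward_props μ1 π1 r rmax D1 P1 H) as [A1 _].
  destruct (reward_props μ2 π2 r rmax D2 P2 H) as [A2 _].
  destruct (jointdiff μ1 μ2 π1 π2 D1 D2 P1 P2) as [K1 K2].
  destruct (dconv_minus _ _ A1 A2) as [M1 M2]. rewrite <- M2.
  destruct (dconv_dom (fun s a => μ1 s * π1 s a * r s a - μ2 s * π2 s a * r s a)
     (fun s a => rmax * Rabs (μ1 s * π1 s a - μ2 s * π2 s a))) as [_ B].
  - intros s a. replace (μ1 s * π1 s a * r s a - μ2 s * π2 s a * r s a) with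
      ((μ1 s * π1 s a - μ2 s * π2 s a) * r s a) by ring.
    rewrite Rabs_mult, Rmult_comm. apply Rmult_le_compat_r. apply Rabs_pos. auto.
  - apply dconv_scal; auto.
  - rewrite ds_scal in B. eapply Rle_trans. exact B.
    apply Rmult_le_compat_l. specialize (H 0%nat 0%nat). assert (0 <= Rabs (r 0%nat 0%nat)) by apply Rabs_pos. lra.
    auto.
Qed.

Lemma sum_lin A B f g N : sum_f_R0 (fun t => A * f t + B * g t) N = A * sum_f_R0 f N + B * sum_f_R0 g N.
Proof. induction N; simpl. ring. rewrite IHN. ring. Qed.

Lemma geom1 γ N : 0 < γ < 1 -> sum_f_R0 (fun t => γ ^ t) N <= 1 / (1 - γ).
Proof.
  intros H. rewrite tech3 by lra. unfold Rdiv. apply Rmult_le_compat_r.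
  apply Rlt_le, Rinv_0_lt_compat; lra. assert (0 < γ ^ S N) by (apply pow_lt; lra). lra.
Qed.

Lemma geom0 γ N : 0 < γ < 1 -> sum_f_R0 (fun t => γ ^ t * INR t) N
  + γ ^ S N * INR (S N) / (1 - γ) + γ ^ S (S N) / (1 - γ) ^ 2 = γ / (1 - γ) ^ 2.
Proof.
  intros H. induction N.
  - simpl sum_f_R0. simpl pow. simpl INR. field. lra.
  - rewrite <- IHN. rewrite tech5, !S_INR. simpl pow. field. lra.
Qed.

Lemma geom2 γ k N : 0 < γ < 1 -> sum_f_R0 (fun t => γ ^ t * INR (t - k)) N <= γ ^ S k / (1 - γ) ^ 2.
Proof.
  intros H. assert (P : forall n, 0 <= γ ^ n) by (intro; apply pow_le; lra).
  assert (Q : 0 < (1 - γ) ^ 2) by (apply pow_lt; lra).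
  revert N; induction k; intro N.
  - rewrite (sum_eq _ (fun t => γ ^ t * INR t)) by (intros; rewrite Nat.sub_0_r; auto).
    rewrite pow_1, <- (geom0 γ N H). assert (0 <= γ ^ S N * INR (S N) / (1 - γ)).
    { unfold Rdiv. apply Rmult_le_pos. apply Rmult_le_pos; auto. apply pos_INR.
      apply Rlt_le, Rinv_0_lt_compat; lra. }
    assert (0 <= γ ^ S (S N) / (1 - γ) ^ 2) by (unfold Rdiv; apply Rmult_le_pos; auto; apply Rlt_le, Rinv_0_lt_compat; lra).
    lra.
  - destruct N.
    + simpl sum_f_R0. replace (0 - S k)%nat with 0%nat by lia. simpl INR. rewrite Rmult_0_r. unfold Rdiv. apply Rmult_le_pos; auto. apply Rlt_le, Rinv_0_lt_compat; lra.
    + rewrite decomp_sum by lia. simpl pred. simpl (0 - S k)%nat. rewrite Rmult_0_r, Rplus_0_l.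
      rewrite (sum_eq _ (fun i => γ ^ i * INR (i - k) * γ)) by (intros; simpl; ring).
      rewrite <- scal_sum. specialize (IHk N).
      replace (γ ^ S (S k) / (1 - γ) ^ 2) with (γ * (γ ^ S k / (1 - γ) ^ 2)) by (simpl; field; lra).
      apply Rmult_le_compat_l; lra.
Qed.

Lemma Series_abs_bound a M : ex_series a -> (forall N, Rabs (sum_f_R0 a N) <= M) -> Rabs (Series a) <= M.
Proof.
  intros H HM. apply Rabs_le. split.
  - assert (E : Series (fun n => - a n) <= M).
    { apply Series_le_bound. apply (ex_series_opp a H).
      intro N. rewrite (sum_eq _ (fun n => a n * -1)) by (intros; ring). rewrite <- scal_sum.
      specialize (HM N). apply Rabs_le_between in HM. lra. }
    rewrite Series_opp in E. lra.
  - apply Series_le_bound; auto. intro N. specialize (HM N). apply Rabs_le_between in HM. lra.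
Qed.

Lemma ds_ge0 f : (forall i j, 0 <= f i j) -> dconv f -> 0 <= ds f.
Proof. intros H [D1 D2]. apply Series_ge0; auto. intro; apply Series_ge0; auto. Qed.

Lemma avg μ (π1 π2 : policy) e : dist μ -> pol π1 -> pol π2 -> (forall s, L1 (π1 s) (π2 s) <= 2 * e) ->
  Series (fun s => μ s * L1 (π1 s) (π2 s)) <= 2 * e.
Proof.
  intros [M1 [M2 M3]] P1 P2 H.
  eapply Rle_trans. apply Series_le with (b := fun s => μ s * (2 * e)).
  - intro s. destruct (L1_props _ _ (P1 s) (P2 s)) as [_ [[? _] _]]. specialize (M1 s).
    split. apply Rmult_le_pos; auto. apply Rmult_le_compat_l; auto.
  - apply (ex_series_scal_r (2 * e) μ M2).
  - rewrite Series_scal_r, M3. lra.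
Qed.

Lemma Hm_conv ν π q1 q2 : dist ν -> pol π -> dyn q1 -> dyn q2 ->
  dconv (fun s a => ν s * π s a * L1 (q1 s a) (q2 s a)) /\
  tsum (fun s => tsum (fun a => ν s * π s a * D_TV (q1 s a) (q2 s a))) =
  / 2 * ds (fun s a => ν s * π s a * L1 (q1 s a) (q2 s a)).
Proof.
  intros D P Q1 Q2. destruct (step_L1 ν ν π π q1 q2 D D P P Q1 Q2) as [A _].
  split; auto.
  assert (E : (fun s a => ν s * π s a * D_TV (q1 s a) (q2 s a)) = (fun s a => /2 * (ν s * π s a * L1 (q1 s a) (q2 s a)))).
  { do 2 (apply functional_extensionality; intro).
    destruct (L1_props _ _ (Q1 x x0) (Q2 x x0)) as [_ [_ ->]]. ring. }
  change (tsum (fun s => tsum (fun a => (fun s a => ν s * π s a * D_TV (q1 s a) (q2 s a)) s a)) =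
     / 2 * ds (fun s a => ν s * π s a * L1 (q1 s a) (q2 s a))).
  rewrite E, tsum2. apply ds_scal. apply dconv_scal; auto.
Qed.

Lemma L1_self p : L1 p p = 0.
Proof.
  unfold L1. rewrite (Series_ext _ (fun x => 0 * 0)). rewrite Series_scal_l. ring.
  intro; rewrite Rminus_diag, Rabs_R0; ring.
Qed.

Lemma tsum_ext f g : (forall n, f n = g n) -> tsum f = tsum g.
Proof. intro H. f_equal. apply functional_extensionality; auto. Qed.

Theorem lemmaB4
  (rho0 : nat -> R) (gamma rmax : R) (r : nat -> nat -> R) (k : nat)
  (pi1pre : policy) (q1pre : dynamics) (pi1post : policy) (q1post : dynamics)
  (pi2pre : policy) (q2pre : dynamics) (pi2post : policy) (q2post : dynamics)
  (eps_m_pre eps_m_post eps_pi_pre eps_pi_post : R)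
  (Hrho : is_dist rho0)
  (Hgamma : 0 < gamma < 1)
  (Hr : forall s a, Rabs (r s a) <= rmax)
  (H1pre : is_policy pi1pre) (H1q : is_dynamics q1pre)
  (H1post : is_policy pi1post) (H1qp : is_dynamics q1post)
  (H2pre : is_policy pi2pre) (H2q : is_dynamics q2pre)
  (H2post : is_policy pi2post) (H2qp : is_dynamics q2post)
  (Hm_pre : forall t i, (i < m_t k t)%nat ->
     tsum (fun s => tsum (fun a =>
       state_law rho0 k pi1pre q1pre pi1post q1post t i s * pi1pre s a *
       D_TV (q1pre s a) (q2pre s a))) <= eps_m_pre)
  (Hm_post : forall t i, (m_t k t <= i < t)%nat ->
     tsum (fun s => tsum (fun a =>
       state_law rho0 k pi1pre q1pre pi1post q1post t i s * pi1post s a *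
       D_TV (q1post s a) (q2post s a))) <= eps_m_post)
  (Hpi_pre : forall s, D_TV (pi1pre s) (pi2pre s) <= eps_pi_pre)
  (Hpi_post : forall s, D_TV (pi1post s) (pi2post s) <= eps_pi_post) :
  Rabs (eta_k rho0 gamma r k pi1pre q1pre pi1post q1post
        - eta_k rho0 gamma r k pi2pre q2pre pi2post q2post)
  <= 2 * rmax *
     (gamma ^ (S k) / (1 - gamma) ^ 2 * (eps_m_pre + eps_pi_pre)
      + INR k / (1 - gamma) * (eps_m_post + eps_pi_post)
      + gamma ^ k / (1 - gamma) * eps_pi_pre
      + 1 / (1 - gamma) * eps_pi_post).
Proof.
  assert (Dr := is_dist_dist _ Hrho).
  assert (P1a : pol pi1pre) by (intro; apply is_dist_dist, H1pre).
  assert (P1b : pol pi1post) by (intro; apply is_dist_dist, H1post).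
  assert (P2a : pol pi2pre) by (intro; apply is_dist_dist, H2pre).
  assert (P2b : pol pi2post) by (intro; apply is_dist_dist, H2post).
  assert (Q1a : dyn q1pre) by (intros s a; apply is_dist_dist, H1q).
  assert (Q1b : dyn q1post) by (intros s a; apply is_dist_dist, H1qp).
  assert (Q2a : dyn q2pre) by (intros s a; apply is_dist_dist, H2q).
  assert (Q2b : dyn q2post) by (intros s a; apply is_dist_dist, H2qp).
  set (nu1 := fun t i => state_law rho0 k pi1pre q1pre pi1post q1post t i).
  set (nu2 := fun t i => state_law rho0 k pi2pre q2pre pi2post q2post t i).
  assert (N1 : forall t i, dist (nu1 t i)) by (intros; apply state_law_dist; auto).
  assert (N2 : forall t i, dist (nu2 t i)) by (intros; apply state_law_dist; auto).
  assert (Hrm : 0 <= rmax) by (specialize (Hr 0%nat 0%nat); pose proof (Rabs_pos (r 0%nat 0%nat)); lra).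
  assert (Lpre : forall s, L1 (pi1pre s) (pi2pre s) <= 2 * eps_pi_pre).
  { intro s. specialize (Hpi_pre s). destruct (L1_props _ _ (P1a s) (P2a s)) as [_ [_ E]]. rewrite E in Hpi_pre. lra. }
  assert (Lpost : forall s, L1 (pi1post s) (pi2post s) <= 2 * eps_pi_post).
  { intro s. specialize (Hpi_post s). destruct (L1_props _ _ (P1b s) (P2b s)) as [_ [_ E]]. rewrite E in Hpi_post. lra. }
  assert (e2 : 0 <= eps_pi_pre).
  { specialize (Lpre 0%nat). destruct (L1_props _ _ (P1a 0%nat) (P2a 0%nat)) as [_ [[? _] _]]. lra. }
  assert (e4 : 0 <= eps_pi_post).
  { specialize (Lpost 0%nat). destruct (L1_props _ _ (P1b 0%nat) (P2b 0%nat)) as [_ [[? _] _]]. lra. }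
  assert (e1 : 0 <= eps_m_pre).
  { assert (Hm := Hm_pre (S k) 0%nat). destruct (Hm_conv (nu1 (S k) 0%nat) pi1pre q1pre q2pre) as [A B]; auto.
    fold (nu1 (S k) 0%nat) in Hm. rewrite B in Hm. assert (0 <= ds (fun s a => nu1 (S k) 0%nat s * pi1pre s a * L1 (q1pre s a) (q2pre s a))).
    { apply ds_ge0; auto. intros. apply Rmult_le_pos. apply Rmult_le_pos. apply N1. apply P1a.
      apply (L1_props _ _ (Q1a i j) (Q2a i j)). }
    assert (0 < m_t k (S k))%nat by (unfold m_t; lia). specialize (Hm H0). lra. }
  assert (e3 : (1 <= k)%nat -> 0 <= eps_m_post).
  { intro Hk. assert (Hm := Hm_post 1%nat 0%nat). destruct (Hm_conv (nu1 1%nat 0%nat) pi1post q1post q2post) as [A B]; auto.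
    fold (nu1 1%nat 0%nat) in Hm. rewrite B in Hm. assert (0 <= ds (fun s a => nu1 1%nat 0%nat s * pi1post s a * L1 (q1post s a) (q2post s a))).
    { apply ds_ge0; auto. intros. apply Rmult_le_pos. apply Rmult_le_pos. apply N1. apply P1b.
      apply (L1_props _ _ (Q1b i j) (Q2b i j)). }
    assert (m_t k 1 <= 0 < 1)%nat by (unfold m_t; lia). specialize (Hm H0). lra. }
  set (c1 := eps_m_pre + eps_pi_pre). set (c2 := eps_m_post + eps_pi_post).
  set (m := fun t => m_t k t).
  assert (Step : forall t i, (i < t)%nat -> L1 (nu1 t (S i)) (nu2 t (S i)) <=
     L1 (nu1 t i) (nu2 t i) + (if Nat.ltb i (m t) then 2 * c1 else 2 * c2)).
  { intros t i Hi. unfold nu1, nu2, m. simpl state_law. destruct (Nat.ltb i (m_t k t)) eqn:E.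
    - apply Nat.ltb_lt in E. fold (nu1 t i) (nu2 t i).
      destruct (step_L1 (nu1 t i) (nu2 t i) pi1pre pi2pre q1pre q2pre) as [_ B]; auto.
      assert (Hm := Hm_pre t i E). fold (nu1 t i) in Hm.
      destruct (Hm_conv (nu1 t i) pi1pre q1pre q2pre) as [_ C]; auto. rewrite C in Hm.
      assert (Av := avg (nu1 t i) pi1pre pi2pre eps_pi_pre (N1 t i) P1a P2a Lpre).
      unfold c1. lra.
    - apply Nat.ltb_ge in E. fold (nu1 t i) (nu2 t i).
      destruct (step_L1 (nu1 t i) (nu2 t i) pi1post pi2post q1post q2post) as [_ B]; auto.
      assert (Hm := Hm_post t i (conj E Hi)). fold (nu1 t i) in Hm.
      destruct (Hm_conv (nu1 t i) pi1post q1post q2post) as [_ C]; auto. rewrite C in Hm.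
      assert (Av := avg (nu1 t i) pi1post pi2post eps_pi_post (N1 t i) P1b P2b Lpost).
      unfold c2. lra. }
  assert (Rec : forall t i, (i <= t)%nat -> L1 (nu1 t i) (nu2 t i) <=
     2 * (INR (Nat.min i (m t)) * c1 + INR (i - m t) * c2)).
  { intros t i; induction i; intro Hi.
    - unfold nu1, nu2. simpl state_law. rewrite L1_self. simpl. lra.
    - specialize (Step t i ltac:(lia)). specialize (IHi ltac:(lia)).
      destruct (Nat.ltb i (m t)) eqn:E.
      + apply Nat.ltb_lt in E. replace (Nat.min (S i) (m t)) with (S (Nat.min i (m t))) by lia.
        replace (S i - m t)%nat with (i - m t)%nat by lia. rewrite S_INR. lra.
      + apply Nat.ltb_ge in E. replace (Nat.min (S i) (m t)) with (Nat.min i (m t)) by lia.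
        replace (S i - m t)%nat with (S (i - m t)) by lia. rewrite S_INR. lra. }
  assert (kc2 : 0 <= INR k * c2).
  { destruct k. simpl; lra. apply Rmult_le_pos. apply pos_INR. unfold c2. assert (H := e3 ltac:(lia)). lra. }
  set (R1 := fun t => ds (fun s a => nu1 t t s * pi1post s a * r s a)).
  set (R2 := fun t => ds (fun s a => nu2 t t s * pi2post s a * r s a)).
  assert (Rt : forall t, Rabs (R1 t - R2 t) <= rmax * (2 * eps_pi_post + 2 * (INR (m t) * c1 + INR k * c2))).
  { intro t. unfold R1, R2. eapply Rle_trans. apply reward_diff; auto.
    apply Rmult_le_compat_l; auto.
    assert (Av := avg (nu1 t t) pi1post pi2post eps_pi_post (N1 t t) P1b P2b Lpost).
    assert (Rc := Rec t t (le_n t)).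
    replace (Nat.min t (m t)) with (m t) in Rc by (unfold m, m_t; lia).
    assert (INR (t - m t) * c2 <= INR k * c2).
    { destruct k. unfold m, m_t. replace (t - (t - 0))%nat with 0%nat by lia. lra.
      apply Rmult_le_compat_r. unfold c2. assert (H := e3 ltac:(lia)). lra.
      apply le_INR. unfold m, m_t. lia. }
    lra. }
  assert (Geo : ex_series (fun t => rmax * gamma ^ t)).
  { apply ex_scal. apply ex_series_geom. rewrite Rabs_pos_eq; lra. }
  assert (Dom : forall (R : nat -> R) , (forall t, Rabs (R t) <= rmax) -> ex_series (fun t => gamma ^ t * R t)).
  { intros R HR. apply (ex_series_dom _ (fun t => rmax * gamma ^ t)); auto. intro t.
    rewrite Rabs_mult, Rabs_pos_eq by (apply pow_le; lra). rewrite Rmult_comm.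
    apply Rmult_le_compat_r. apply pow_le; lra. auto. }
  assert (B1 : forall t, Rabs (R1 t) <= rmax) by (intro; apply reward_props; auto).
  assert (B2 : forall t, Rabs (R2 t) <= rmax) by (intro; apply reward_props; auto).
  assert (Eta1 : eta_k rho0 gamma r k pi1pre q1pre pi1post q1post = Series (fun t => gamma ^ t * R1 t)).
  { unfold eta_k. rewrite (tsum_ext _ (fun t => gamma ^ t * R1 t)). apply tsum_Series; auto.
    intro t. cbv beta. f_equal. apply tsum2. apply (reward_props _ _ r rmax); auto. }
  assert (Eta2 : eta_k rho0 gamma r k pi2pre q2pre pi2post q2post = Series (fun t => gamma ^ t * R2 t)).
  { unfold eta_k. rewrite (tsum_ext _ (fun t => gamma ^ t * R2 t)). apply tsum_Series; auto.
    intro t. cbv beta. f_equal. apply tsum2. apply (reward_props _ _ r rmax); auto. }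
  rewrite Eta1, Eta2, <- Series_minus by auto.
  apply Series_abs_bound.
  { apply (ex_series_minus (fun t => gamma ^ t * R1 t) (fun t => gamma ^ t * R2 t)); auto. }
  intro N. eapply Rle_trans. apply sum_f_R0_triangle.
  set (A := rmax * (2 * eps_pi_post + 2 * (INR k * c2))). set (B := 2 * rmax * c1).
  eapply Rle_trans. apply (sum_Rle _ (fun t => A * gamma ^ t + B * (gamma ^ t * INR (t - k)))).
  { intros t _. replace (gamma ^ t * R1 t - gamma ^ t * R2 t) with (gamma ^ t * (R1 t - R2 t)) by ring.
    rewrite Rabs_mult, Rabs_pos_eq by (apply pow_le; lra).
    eapply Rle_trans. apply Rmult_le_compat_l. apply pow_le; lra. apply Rt.
    right. unfold A, B, m, m_t. ring. }
  rewrite sum_lin.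
  assert (G1 := geom1 gamma N Hgamma). assert (G2 := geom2 gamma k N Hgamma).
  assert (A0 : 0 <= A) by (unfold A; apply Rmult_le_pos; lra).
  assert (B0 : 0 <= B) by (unfold B, c1; apply Rmult_le_pos; lra).
  assert (X1 := Rmult_le_compat_l _ _ _ A0 G1). assert (X2 := Rmult_le_compat_l _ _ _ B0 G2).
  assert (Eq : 2 * rmax *
     (gamma ^ (S k) / (1 - gamma) ^ 2 * c1
      + INR k / (1 - gamma) * c2
      + gamma ^ k / (1 - gamma) * eps_pi_pre
      + 1 / (1 - gamma) * eps_pi_post) = A * (1 / (1 - gamma)) + B * (gamma ^ S k / (1 - gamma) ^ 2)
      + 2 * rmax * (gamma ^ k / (1 - gamma) * eps_pi_pre)).
  { unfold A, B, c1, c2. field. lra. }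
  assert (0 <= 2 * rmax * (gamma ^ k / (1 - gamma) * eps_pi_pre)).
  { apply Rmult_le_pos. lra. apply Rmult_le_pos; auto. unfold Rdiv. apply Rmult_le_pos.
    apply pow_le; lra. apply Rlt_le, Rinv_0_lt_compat; lra. }
  change (sum_f_R0 (fun t => gamma ^ t) N) with (sum_f_R0 (pow gamma) N) in X1. lra.
Qed.
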